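(* For all integers $m\ge1$, $r\ge0$ and $n\ge0$, $$\mathcal B_n(x)=\sum_{k=0}^n\sum_{l=k}^n\binom nl\,\mathcal B_{n-l}\,w_{m,r}(l,k)\,\mathcal D_{m,r}(k,x).$$
   Context: The Bernoulli polynomials are defined by $\sum_{n\ge0}\mathcal B_n(x)\frac{t^n}{n!}=\frac{te^{xt}}{e^t-1}$ and $\mathcal B_n:=\mathcal B_n(0)$. For integers $m\ge1$, $n,k,r\ge0$: the $r$-Whitney numbers of the first kind $w_{m,r}(n,k)$ are defined by $\sum_{n\ge k}w_{m,r}(n,k)\frac{z^n}{n!}=(1+mz)^{-r/m}\frac{\ln^k(1+mz)}{m^kk!}$; the $r$-Whitney numbers of the second kind $W_{m,r}(n,k)$ by $\sum_{n\ge k}W_{m,r}(n,k)\frac{z^n}{n!}=\frac{e^{rz}}{k!}\left(\frac{e^{mz}-1}{m}\right)^k$; and the $r$-Dowling polynomial is $\mathcal D_{m,r}(n,u):=\sum_{k=0}^nW_{m,r}(n,k)u^k$. *)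

(* Defs.v *)
(* Formal power series are represented by their coefficient
   sequences (nat -> R); all generating-function definitions of the paper are
   rendered literally as coefficient extraction from products of such series. *)
From HB Require Import structures.
From mathcomp Require Import all_boot all_order all_algebra.
Set Implicit Arguments. Unset Strict Implicit. Unset Printing Implicit Defensive.
Import Order.TTheory GRing.Theory Num.Theory.
Local Open Scope ring_scope.

Section FPS.
Variable R : numFieldType.

Definition fps := nat -> R.

Definition fps_one : fps := fun n => (n == 0%N)%:R.
Definition fps_mul (f g : fps) : fps :=
  fun n => \sum_(k < n.+1) f k * g (n - k)%N.
Definition fps_pow (f : fps) (k : nat) : fps := iter k (fps_mul f) fps_one.
Definition fps_scale (c : R) (f : fps) : fps := fun n => c * f n.
Definition fps_sub (f g : fps) : fps := fun n => f n - g n.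

Definition fps_exp (a : R) : fps := fun n => a ^+ n / (n`!)%:R.
Definition fps_log1p (a : R) : fps :=
  fun n => if n is n'.+1 then (-1) ^+ n' * a ^+ n / n%:R else 0.
Definition gbinom (b : R) (n : nat) : R := (\prod_(i < n) (b - i%:R)) / (n`!)%:R.
Definition fps_binpow (a b : R) : fps := fun n => gbinom b n * a ^+ n.

(* multiplicative inverse of a series with nonzero constant term:
   first n+1 coefficients computed by the usual recursion *)
Fixpoint fps_inv_seq (c : fps) (n : nat) : seq R :=
  match n with
  | 0%N => [:: (c 0%N)^-1]
  | n'.+1 =>
      let s := fps_inv_seq c n' in
      rcons s (- (c 0%N)^-1 * \sum_(k < n) nth 0 s k * c (n - k)%N)
  end.
Definition fps_inv (c : fps) : fps := fun n => nth 0 (fps_inv_seq c n) n.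

Definition expm1_div_t : fps := fun n => 1 / ((n.+1)`!)%:R.

(* sum_n B_n(x) t^n/n! = t e^{xt}/(e^t-1) = e^{xt} * ((e^t-1)/t)^{-1} *)
Definition bernpoly (n : nat) (x : R) : R :=
  (n`!)%:R * fps_mul (fps_exp x) (fps_inv expm1_div_t) n.
Definition bern (n : nat) : R := bernpoly n 0.

(* r-Whitney numbers of the first kind:
   sum_n w(n,k) z^n/n! = (1+mz)^{-r/m} ln^k(1+mz) / (m^k k!) *)
Definition whitney1 (m r n k : nat) : R :=
  (n`!)%:R * fps_mul (fps_binpow m%:R (- (r%:R / m%:R)))
                     (fps_pow (fps_log1p m%:R) k) n
  / (m%:R ^+ k * (k`!)%:R).

(* r-Whitney numbers of the second kind:
   sum_n W(n,k) z^n/n! = e^{rz}/k! ((e^{mz}-1)/m)^k *)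
Definition whitney2 (m r n k : nat) : R :=
  (n`!)%:R * fps_mul (fps_exp r%:R)
     (fps_pow (fps_scale (m%:R)^-1 (fps_sub (fps_exp m%:R) fps_one)) k) n
  / (k`!)%:R.

Definition dowling (m r n : nat) (u : R) : R :=
  \sum_(k < n.+1) whitney2 m r n k * u ^+ k.

End FPS.

(* Main.v *)
Require Import Defs.
From HB Require Import structures.
From mathcomp Require Import all_boot all_order all_algebra.
From mathcomp Require Import ring.
Import Order.TTheory GRing.Theory Num.Theory.
Local Open Scope ring_scope.
Set Implicit Arguments. Unset Strict Implicit.

Section S.
Variable R : numFieldType.
Implicit Types (f g : fps R) (p q : {poly R}).

Definition tp (N : nat) f : {poly R} := \poly_(i < N) f i.

Lemma coef_tp N f i : (tp N f)`_i = if (i < N)%N then f i else 0.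
Proof. by rewrite coef_poly. Qed.

Lemma mul_coef_eq p q p' q' n :
  (forall i, (i <= n)%N -> p`_i = p'`_i) ->
  (forall i, (i <= n)%N -> q`_i = q'`_i) -> (p * q)`_n = (p' * q')`_n.
Proof.
move=> hp hq; rewrite !coefM; apply: eq_bigr => [[i /= hi]] _.
by rewrite hp // hq // leq_subr.
Qed.

Lemma fps_pow_tp N f k n : (n < N)%N -> fps_pow f k n = (tp N f ^+ k)`_n.
Proof.
elim: k n => [|k IH] n hn; first by rewrite expr0 coef1.
rewrite exprS /fps_pow iterS -/(fps_pow f k) /fps_mul coefM.
apply: eq_bigr => [[i /= hi]] _.
have hiN : (i < N)%N by apply: leq_ltn_trans hn; rewrite -ltnS.
have hsN : (n - i < N)%N by apply: leq_ltn_trans hn; rewrite leq_subr.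
by rewrite coef_tp hiN IH.
Qed.

Lemma fps_mul_pow_tp N f g k n : (n < N)%N ->
  fps_mul f (fps_pow g k) n = (tp N f * tp N g ^+ k)`_n.
Proof.
move=> hn; rewrite /fps_mul coefM; apply: eq_bigr => [[i /= hi]] _.
have hiN : (i < N)%N by apply: leq_ltn_trans hn; rewrite -ltnS.
have hsN : (n - i < N)%N by apply: leq_ltn_trans hn; rewrite leq_subr.
by rewrite coef_tp hiN (fps_pow_tp _ _ hsN).
Qed.

Lemma coef_tp_deriv N f i : (i.+1 < N)%N -> (tp N f)^`()`_i = f i.+1 *+ i.+1.
Proof. by move=> h; rewrite coef_deriv coef_tp h. Qed.

Lemma coefQ (c : R) p i :
  ((1 + c%:P * 'X) * p^`())`_i = p`_i.+1 *+ i.+1 + c * (p`_i *+ i).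
Proof.
rewrite mulrDl mul1r coefD -mulrA coefCM coefXM !coef_deriv.
by case: i => [|i] /=; rewrite ?mulr0n ?mulr0.
Qed.

Lemma fps_mul0 f g : fps_mul f g 0 = f 0%N * g 0%N.
Proof. by rewrite /fps_mul big_ord_recl big_ord0 addr0 subn0. Qed.

Lemma fps_pow0 f k : fps_pow f k 0 = f 0%N ^+ k.
Proof.
elim: k => [|k IH]; first by rewrite expr0.
by rewrite /fps_pow iterS fps_mul0 -/(fps_pow f k) IH exprS.
Qed.

Lemma natf_neq0 k : (k`!)%:R != 0 :> R.
Proof. by rewrite pnatr_eq0 -lt0n fact_gt0. Qed.
Lemma natS_neq0 k : (k.+1)%:R != 0 :> R.
Proof. by rewrite pnatr_eq0. Qed.

Variables (m r : nat).
Hypothesis hm : (0 < m)%N.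
Lemma m_neq0 : (m%:R : R) != 0.
Proof. by rewrite pnatr_eq0 -lt0n. Qed.

Definition gW : fps R := fps_scale (m%:R)^-1 (fps_sub (fps_exp m%:R) (fps_one R)).
Definition cW k n := fps_mul (fps_exp r%:R) (fps_pow gW k) n.

Lemma exp_deriv (a : R) i : fps_exp a i.+1 *+ i.+1 = a * fps_exp a i.
Proof.
rewrite /fps_exp factS natrM -mulr_natr exprS.
have := natf_neq0 i; have := natS_neq0 i; move=> h1 h2; field.
by rewrite h2 nat1r h1.
Qed.

Lemma gW_deriv i : gW i.+1 *+ i.+1 = (i == 0)%:R + m%:R * gW i.
Proof.
rewrite /gW /fps_scale /fps_sub /fps_one.
have := exp_deriv m%:R i; rewrite /fps_exp => e.
have hm0 := m_neq0.
case: i e => [|i] e /=.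
 rewrite (_ : 1`! = 1)%N // (_ : 0`! = 1)%N // expr1 expr0 !subr0 mulr1n.
  by field.
by rewrite !subr0 add0r -mulrnAr e mulrCA.
Qed.

Lemma cW_rec k n : cW k n.+1 *+ n.+1 = (r%:R + m%:R * k%:R) * cW k n
   + (if k is k'.+1 then cW k' n *+ k else 0).
Proof.
have hN : forall j, (j <= n.+1)%N -> (j < n.+2)%N by [].
rewrite /cW (fps_mul_pow_tp (N:=n.+2)) // (fps_mul_pow_tp (N:=n.+2)) //.
set E := tp n.+2 _; set G := tp n.+2 gW.
rewrite -coef_deriv derivM deriv_exp coefD.
have h1 : (E^`() * G^+k)`_n = (r%:R%:P * E * G^+k)`_n.
  apply: mul_coef_eq => i hi //.
  rewrite coef_tp_deriv ?ltnS // exp_deriv coefCM coef_tp.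
  by rewrite (leq_ltn_trans hi).
have h2 : (E * (G^`() * G^+k.-1 *+ k))`_n =
    ((E * G^+k.-1 *+ k) * (1 + m%:R%:P * G))`_n.
  have -> : E * (G^`() * G ^+ k.-1 *+ k) = (E * G ^+ k.-1 *+ k) * G^`() by ring.
  apply: mul_coef_eq => i hi //.
  rewrite coef_tp_deriv ?ltnS // gW_deriv coefD coef1 coefCM coef_tp.
  by rewrite (leq_ltn_trans hi).
rewrite h1 h2; clear h1 h2.
rewrite -mulrA coefCM.
case: k => [|k].
  by rewrite mulr0n mul0r coef0 !addr0 mulr0 addr0.
rewrite (fps_mul_pow_tp (N:=n.+2)) // -/E -/G.
clearbody E G.
have -> : (E * G ^+ k.+1.-1 *+ k.+1 * (1 + m%:R%:P * G)) =
   (E * G ^+ k) *+ k.+1 + m%:R%:P * (E * G ^+ k.+1) *+ k.+1.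
  rewrite [k.+1.-1]/= exprS. move: (m%:R)%:P k.+1 => c K. Timeout 30 ring.
rewrite coefD !coefMn coefCM.
move: (E * G ^+ k.+1)`_n (E * G ^+ k)`_n => a b.
move: k.+1 => K. Timeout 30 ring.
Qed.

End S.

Section S.
Variable R : numFieldType.
Variables (m r : nat).
Hypothesis hm : (0 < m)%N.
Let m_neq0 := @m_neq0 R m hm.
Let natf_neq0 := @natf_neq0 R.
Let natS_neq0 := @natS_neq0 R.
Ltac nz := rewrite ?nat1r -?natrD; repeat (apply/andP; split);
  rewrite ?natf_neq0 ?m_neq0 ?expf_neq0 ?natf_neq0 ?m_neq0 ?pnatr_eq0 //.

Definition hW : fps R := fps_binpow m%:R (- (r%:R / m%:R)).
Definition lW : fps R := fps_log1p m%:R.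
Definition dW k n := fps_mul hW (fps_pow lW k) n.

Lemma gbinomS (b : R) i : gbinom b i.+1 = gbinom b i * (b - i%:R) / i.+1%:R.
Proof.
rewrite /gbinom big_ord_recr factS natrM.
set p := \big[_/_]_(_ < i) _.
have -> : p = \prod_(i0 < i) (b - i0%:R) by [].
move: (\prod_(i0 < i) _) => q. clear p.
change (q * (b - i%:R) / (i.+1%:R * i`!%:R) = q / i`!%:R * (b - i%:R) / i.+1%:R).
have h1 := natf_neq0 i; have h2 := natS_neq0 i.
rewrite -nat1r in h2 *. field; nz.
Qed.


Lemma hW_deriv i : hW i.+1 *+ i.+1 + m%:R * (hW i *+ i) = - r%:R * hW i.
Proof.
rewrite /hW /fps_binpow gbinomS.
move: (gbinom _ i) => p.
have h2 := natS_neq0 i; have h3 := m_neq0.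
rewrite exprS. move: (m%:R ^+ i) => M.
rewrite -nat1r in h2 *. field.
by rewrite h2 h3.
Qed.

Lemma lW_deriv i : lW i.+1 *+ i.+1 + m%:R * (lW i *+ i) = (i == 0)%:R * m%:R.
Proof.
rewrite /lW /fps_log1p.
case: i => [|i].
  by rewrite eqxx mulr0n mulr0 addr0 expr0 expr1 mul1r divr1 !mulr1n.
have h2 := natS_neq0 i; have h3 := natS_neq0 i.+1.
rewrite (_ : (i.+1 == 0)%N = false) // mul0r exprS [m%:R ^+ i.+2]exprS.
field; nz.
Qed.

Lemma dW_rec k n : dW k n.+1 *+ n.+1 + m%:R * (dW k n *+ n) =
  - r%:R * dW k n + (if k is k'.+1 then dW k' n *+ k * m%:R else 0).
Proof.
rewrite /dW (fps_mul_pow_tp (N:=n.+2)) // (fps_mul_pow_tp (N:=n.+2)) //.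
set H := tp n.+2 hW; set L := tp n.+2 lW.
rewrite -coefQ derivM deriv_exp.
set Q := 1 + _ * 'X.
have -> : Q * (H^`() * L ^+ k + H * (L^`() * L ^+ k.-1 *+ k)) =
  (Q * H^`()) * L ^+ k + (H * L ^+ k.-1 *+ k) * (Q * L^`()).
  move: Q (H^`()) (L^`()) => a b c. Timeout 30 ring.
rewrite coefD.
have h1 : ((Q * H^`()) * L ^+ k)`_n = ((- r%:R)%:P * H * L^+k)`_n.
  apply: mul_coef_eq => i hi //.
  have ha : (i.+1 < n.+2)%N by rewrite !ltnS.
  have hb : (i < n.+2)%N by rewrite ltnS (leq_trans hi).
  rewrite coefQ coefCM !coef_tp ha hb.
  by rewrite hW_deriv.
have h2 : ((H * L ^+ k.-1 *+ k) * (Q * L^`()))`_n =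
    ((H * L^+k.-1 *+ k) * (m%:R)%:P)`_n.
  apply: mul_coef_eq => i hi //.
  have ha : (i.+1 < n.+2)%N by rewrite !ltnS.
  have hb : (i < n.+2)%N by rewrite ltnS (leq_trans hi).
  rewrite coefQ coefC !coef_tp ha hb.
  by rewrite lW_deriv; case: (i == 0%N); rewrite ?mul1r ?mul0r.
rewrite h1 h2 -mulrA coefCM coefMC coefMn; clear h1 h2.
case: k => [|k]; first by rewrite mulr0n mul0r addr0.
by rewrite (fps_mul_pow_tp (N:=n.+2)).
Qed.

Lemma W_def n k : whitney2 R m r n k = n`!%:R * cW R m r k n / k`!%:R.
Proof. by []. Qed.
Lemma w_def n k : whitney1 R m r n k = n`!%:R * dW k n / (m%:R ^+ k * k`!%:R).
Proof. by []. Qed.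

Lemma W_rec n k : whitney2 R m r n.+1 k =
  (if k is k'.+1 then whitney2 R m r n k' else 0) + (r%:R + m%:R * k%:R) * whitney2 R m r n k.
Proof.
have e := @cW_rec R m r hm k n.
rewrite W_def [whitney2 R m r n k]W_def.
have -> : cW R m r k n.+1 = ((r%:R + m%:R * k%:R) * cW R m r k n
   + (if k is k'.+1 then cW R m r k' n *+ k else 0)) / n.+1%:R.
  rewrite -e. field; nz.
clear e.
rewrite factS natrM.
have h1 := natf_neq0 n; have h3 := natS_neq0 n.
case: k => [|k].
  rewrite addr0 add0r. field; nz.
rewrite W_def factS natrM.
have h2 := natf_neq0 k; have h4 := natS_neq0 k.
field; nz.
Qed.

Lemma w_rec n k : whitney1 R m r n.+1 k =
  (if k is k'.+1 then whitney1 R m r n k' else 0) - (r%:R + m%:R * n%:R) * whitney1 R m r n k.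
Proof.
have e := dW_rec k n.
rewrite w_def [whitney1 R m r n k]w_def.
have -> : dW k n.+1 = (- r%:R * dW k n + (if k is k'.+1 then dW k' n *+ k * m%:R else 0)
   - m%:R * (dW k n *+ n)) / n.+1%:R.
  rewrite -e. field; nz.
clear e.
rewrite factS natrM.
have h1 := natf_neq0 n; have h0 := m_neq0; have h3 := natS_neq0 n.
case: k => [|k].
  rewrite add0r addr0. field; nz.
rewrite w_def factS natrM exprS.
have h2 := natf_neq0 k; have h4 := natS_neq0 k.
field; nz.
Qed.
End S.

Section Orth.
Variable R : numFieldType.
Variables (w W : nat -> nat -> R) (c : nat -> R).
Hypotheses (hw0 : forall k, w 0%N k = (k == 0%N)%:R)
  (hwS0 : forall l, w l.+1 0%N = - (c l * w l 0%N))
  (hwSS : forall l k, w l.+1 k.+1 = w l k - c l * w l k.+1)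
  (hW0 : forall j, W 0%N j = (j == 0%N)%:R)
  (hWS0 : forall n, W n.+1 0%N = c 0%N * W n 0%N)
  (hWSS : forall n j, W n.+1 j.+1 = W n j + c j.+1 * W n j.+1).

Lemma wvan n k : (n < k)%N -> w n k = 0.
Proof.
elim: n k => [|n IH] [|k] //= h.
by rewrite hwSS !IH // ?mulr0 ?subr0 // ltnW.
Qed.

Lemma Wvan n k : (n < k)%N -> W n k = 0.
Proof.
elim: n k => [|n IH] [|k] //= h.
by rewrite hWSS !IH // ?mulr0 ?addr0 // ltnW.
Qed.

Lemma orth l j : \sum_(0 <= k < l.+1) w l k * W k j = (l == j)%:R.
Proof.
elim: l j => [|l IH] j.
  by rewrite big_nat1 hw0 hW0 mul1r eq_sym.
have hB : \sum_(0 <= i < l.+1) w l i.+1 * W i.+1 j = (l == j)%:R - w l 0%N * W 0%N j.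
  have e : \sum_(0 <= i < l.+2) w l i * W i j = (l == j)%:R.
    by rewrite big_nat_recr //= IH (@wvan l l.+1) // mul0r addr0.
  rewrite big_nat_recl // in e. by rewrite -e addrC addKr.
rewrite big_nat_recl // hwS0.
under eq_bigr => i _ do rewrite hwSS mulrBl -mulrA.
rewrite sumrB -mulr_sumr hB.
case: j IH hB => [|j] IH hB.
  under eq_bigr => i _ do rewrite hWS0 mulrCA.
  rewrite -mulr_sumr IH.
  case: eqP => [->|_]; rewrite /= ?mulr1n ?mulr0n; ring.
under eq_bigr => i _ do rewrite hWSS mulrDr mulrCA.
rewrite big_split /= -mulr_sumr !IH eqSS.
case: (l =P j.+1) => [->|_]; rewrite /= ?eqxx ?mulr1n ?mulr0n; ring.
Qed.
End Orth.


Lemma sum_trunc (R : numFieldType) (F : nat -> R) a b : (a <= b)%N ->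
  (forall k, (a <= k)%N -> (k < b)%N -> F k = 0) ->
  \sum_(k < b) F k = \sum_(k < a) F k.
Proof.
move=> hab hF; rewrite -!(big_mkord xpredT) (@big_cat_nat _ _ _ a) //=.
rewrite [X in _ + X]big_nat_cond [X in _ + X]big1 ?addr0 // => k /andP[/andP[h1 h2] _].
exact: hF.
Qed.

Lemma W0 (R : numFieldType) m r j : (0 < m)%N -> whitney2 R m r 0 j = (j == 0%N)%:R.
Proof.
move=> hm; rewrite W_def /cW fps_mul0 fps_pow0.
have -> : gW R m 0 = 0.
  by rewrite /gW /fps_scale /fps_sub /fps_exp /fps_one expr0 fact0 divr1 eqxx mulr1n subrr mulr0.
rewrite /fps_exp expr0 fact0 divr1 mul1r expr0n.
case: j => [|j]; rewrite /= ?mulr1n ?mulr0n ?mulr0 ?mul0r ?fact0 ?divr1; by rewrite ?mul1r ?mulr1 ?divr1 ?mul0r ?mulr0.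
Qed.

Lemma w0 (R : numFieldType) m r k : (0 < m)%N -> whitney1 R m r 0 k = (k == 0%N)%:R.
Proof.
move=> hm; rewrite w_def /dW fps_mul0 fps_pow0.
have -> : lW R m 0 = 0 by [].
have -> : hW R m r 0 = 1.
  by rewrite /hW /fps_binpow /gbinom big_ord0 fact0 divr1 expr0 mulr1.
rewrite expr0n mul1r.
case: k => [|k]; rewrite /= ?mulr1n ?mulr0n ?mulr0 ?mul0r ?fact0 ?expr0 ?divr1 ?mulr1; by rewrite ?mul1r ?mulr1 ?divr1 ?mul0r ?mulr0 ?invr1.
Qed.

Lemma bern_eq (R : numFieldType) k :
  bern R k = k`!%:R * fps_inv (expm1_div_t R) k.
Proof.
rewrite /bern /bernpoly /fps_mul big_ord_recl /fps_exp expr0 fact0 divr1 mul1r subn0.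
rewrite big1 ?addr0 // => i _.
by rewrite exprS !mul0r.
Qed.

Lemma bernpoly_appell (R : numFieldType) n (x : R) :
  bernpoly n x = \sum_(l < n.+1) 'C(n, l)%:R * bern R (n - l) * x ^+ l.
Proof.
rewrite /bernpoly /fps_mul mulr_sumr; apply: eq_bigr => [[l hl]] _ /=.
rewrite bern_eq /fps_exp.
have hl' : (l <= n)%N by rewrite -ltnS.
rewrite -{1}(bin_fact hl') !natrM.
have h1 := natf_neq0 R l; have h2 := natf_neq0 R (n - l).
field. by rewrite h1.
Qed.


Unset Implicit Arguments.
Theorem mainTheorem14 (R : numFieldType) (m r n : nat) (x : R) :
  (1 <= m)%N ->
  bernpoly n x =
  \sum_(k < n.+1) \sum_(k <= l < n.+1)
     ('C(n, l))%:R * bern R (n - l) * whitney1 R m r l k * dowling m r k x.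
Proof.
move=> hm.
pose c := fun k : nat => (r%:R + m%:R * k%:R : R).
have hw0 : forall k, whitney1 R m r 0%N k = (k == 0%N)%:R by move=> k; exact: w0.
have hW0 : forall k, whitney2 R m r 0%N k = (k == 0%N)%:R by move=> k; exact: W0.
have hwS0 : forall l, whitney1 R m r l.+1 0%N = - (c l * whitney1 R m r l 0%N).
  by move=> l; rewrite (@w_rec R m r hm) sub0r.
have hwSS : forall l k, whitney1 R m r l.+1 k.+1 =
    whitney1 R m r l k - c l * whitney1 R m r l k.+1.
  by move=> l k; rewrite (@w_rec R m r hm).
have hWS0 : forall l, whitney2 R m r l.+1 0%N = c 0%N * whitney2 R m r l 0%N.
  by move=> l; rewrite (@W_rec R m r hm) add0r.
have hWSS : forall l k, whitney2 R m r l.+1 k.+1 =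
    whitney2 R m r l k + c k.+1 * whitney2 R m r l k.+1.
  by move=> l k; rewrite (@W_rec R m r hm).
have wv := wvan hw0 hwSS.
have Wv := Wvan hW0 hWSS.
have ort := orth hw0 hwS0 hwSS hW0 hWS0 hWSS.
have key : forall l, (l < n.+1)%N ->
    \sum_(k < n.+1) whitney1 R m r l k * dowling m r k x = x ^+ l.
  move=> l hl.
  have e1 : forall k : 'I_n.+1, dowling m r k x =
      \sum_(j < n.+1) whitney2 R m r k j * x ^+ j.
    move=> k; rewrite /dowling (@sum_trunc _ (fun j => whitney2 R m r k j * x ^+ j) k.+1 n.+1) //.
    by move=> j hj _; rewrite Wv // mul0r.
  under eq_bigr => k _ do rewrite e1 mulr_sumr.
  rewrite exchange_big /=.
  under eq_bigr => j _ do (under eq_bigr => k _ do rewrite mulrA; rewrite -mulr_suml).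
  have e2 : forall j, \sum_(k < n.+1) whitney1 R m r l k * whitney2 R m r k j = (l == j)%:R.
    move=> j; rewrite (@sum_trunc _ (fun k => whitney1 R m r l k * whitney2 R m r k j) l.+1 n.+1).
    - by rewrite -ort big_mkord.
    - by [].
    - by move=> k hk _; rewrite wv // mul0r.
  under eq_bigr => j _ do rewrite e2.
  rewrite (bigD1 (Ordinal hl)) //= eqxx mul1r big1 ?addr0 // => j hj.
  have -> : (l == j) = false.
    apply/negbTE; apply: contra hj => /eqP e; apply/eqP/val_inj => /=; by rewrite e.
  by rewrite mul0r.
have step1 : forall k : 'I_n.+1, \sum_(k <= l < n.+1)
    ('C(n, l))%:R * bern R (n - l) * whitney1 R m r l k * dowling m r k x =
    \sum_(l < n.+1) ('C(n, l))%:R * bern R (n - l) * whitney1 R m r l k * dowling m r k x.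
  move=> k.
  rewrite -(big_mkord xpredT (fun l => 'C(n, l)%:R * bern R (n - l) * whitney1 R m r l k * dowling m r k x)).
  rewrite (@big_cat_nat _ _ _ k (0%N) n.+1) //=; last first.
    exact: ltnW.
  rewrite [X in _ = X + _]big_nat_cond [X in _ = X + _]big1 ?add0r // => l /andP[/andP[_ hlk] _].
  by rewrite wv // mulr0 mul0r.
under eq_bigr => k _ do rewrite step1.
rewrite exchange_big bernpoly_appell /=; apply: eq_bigr => [[l hl]] _ /=.
under eq_bigr => k _ do rewrite -mulrA.
by rewrite -mulr_sumr key.
Qed.
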